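(* Let $(\Omega',o)\to(\Omega,o)$ be a holomorphic totally geodesic embedding of pointed bounded symmetric domains, with corresponding injective Lie algebra morphism $\rho:\mathfrak g'\to\mathfrak g$, and let $p=\dim\Omega'$. Then $[\rho(\mathfrak p'^+)]\in\mathrm{Gr}(p,T_o\Omega)$ is a critical point of the function $\mathcal B\mapsto\|\Sigma(\mathcal B)\|^2$ on $\mathrm{Gr}(p,T_o\Omega)$.
   Context: A pointed bounded symmetric domain $(\Omega,o)$, $\Omega=G/K$, has data: $\mathfrak g=\mathfrak l\oplus\mathfrak p$ Cartan decomposition, $H_0$ central in $\mathfrak l$ with $\mathrm{ad}(H_0)^2$ the Cartan involution and $\mathrm{ad}(H_0)|_{\mathfrak p}$ the complex structure at $o$; $\mathfrak p^+\cong T^{1,0}_o\Omega$ is the $\sqrt{-1}$-eigenspace of $\mathrm{ad}H_0$ in $\mathfrak p^{\mathbb C}$, with Hermitian form $(\alpha,\overline\beta)_{\mathcal K}$ ($\mathcal K$ the Killing form); similarly $\mathfrak g',\mathfrak p'^+,H'_0$ for $\Omega'$. Totally geodesic holomorphic embeddings of pointed domains correspond to injective Lie algebra morphisms $\rho:\mathfrak g'\to\mathfrak g$ with $\mathrm{ad}(H_0)\rho=\rho\,\mathrm{ad}(H'_0)$; then $\rho(\mathfrak p'^+)\subset\mathfrak p^+$ is the tangent space of $\Omega'$ at $o$. $\mathrm{Gr}(p,T_o\Omega)$ is the Grassmannian of complex $p$-planes in $\mathfrak p^+$. For $\mathcal B$ with unitary basis $(e_i)$, $\Sigma(\mathcal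 B)=\sqrt{-1}\sum_i[e_i,\overline{e_i}]\in\mathfrak l^{\mathbb C}$, and $\|\cdot\|$ is the norm on $\mathfrak l^{\mathbb C}$ from $(\lambda,\overline\mu)_{\mathcal K}$. *)

(* Defs.v *)
From mathcomp Require Import all_boot all_order all_algebra.
From mathcomp Require Import all_classical all_reals all_analysis.
From mathcomp Require Import complex.

Set Implicit Arguments.
Unset Strict Implicit.
Unset Printing Implicit Defensive.

Import GRing.Theory Num.Theory.
Local Open Scope ring_scope.

(* Finite-dimensional Lie algebras over a commutative ring K, on the         *)
(* coordinate space 'rV[K]_n, given by structure constants                   *)
(* [e_i, e_j] = c i j.                                                       *)

Definition lie_br {K : comNzRingType} {n : nat} (c : 'I_n -> 'I_n -> 'rV[K]_n)
  (x y : 'rV[K]_n) : 'rV[K]_n :=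
  \sum_(i < n) \sum_(j < n) (x 0 i * y 0 j) *: c i j.

(* ad x, acting on row vectors on the right: y *m ad c x = [x, y]. *)
Definition ad {K : comNzRingType} {n : nat} (c : 'I_n -> 'I_n -> 'rV[K]_n)
  (x : 'rV[K]_n) : 'M[K]_n :=
  \matrix_(j < n) lie_br c x (delta_mx 0 j).

Definition killing {K : comNzRingType} {n : nat} (c : 'I_n -> 'I_n -> 'rV[K]_n)
  (x y : 'rV[K]_n) : K :=
  \tr (ad c x *m ad c y).

Definition is_lie {K : comNzRingType} {n : nat} (c : 'I_n -> 'I_n -> 'rV[K]_n) :=
  (forall x, lie_br c x x = 0) /\
  (forall x y z, lie_br c x (lie_br c y z) + lie_br c y (lie_br c z x)
                 + lie_br c z (lie_br c x y) = 0).

(* Pointed bounded symmetric domain data (g = l (+) p, H0).                  *)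
(* l and p are (row spaces of) real n x n matrices.                          *)

Section BSD.
Variables (R : realType) (n : nat).
Variable c : 'I_n -> 'I_n -> 'rV[R]_n.
Variables (l p : 'M[R]_n) (H0 : 'rV[R]_n).

Definition is_ideal (I : 'M[R]_n) :=
  forall x y : 'rV[R]_n, (x <= I)%MS -> (lie_br c x y <= I)%MS.

Definition pointed_bsd : Prop :=
  [/\ is_lie c,
      ((l + p == 1%:M)%MS /\ ((l :&: p)%MS == 0)) /\
      (forall x y : 'rV[R]_n, (x <= l)%MS -> (y <= l)%MS -> (lie_br c x y <= l)%MS) /\
      (forall x y : 'rV[R]_n, (x <= l)%MS -> (y <= p)%MS -> (lie_br c x y <= p)%MS) /\
      (forall x y : 'rV[R]_n, (x <= p)%MS -> (y <= p)%MS -> (lie_br c x y <= l)%MS),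
      (forall x : 'rV[R]_n, (x <= l)%MS -> x != 0 -> killing c x x < 0) /\
      (forall x : 'rV[R]_n, (x <= p)%MS -> x != 0 -> 0 < killing c x x),
      (forall I : 'M[R]_n, (I <= l)%MS -> is_ideal I -> I == 0) &
      [/\ (H0 <= l)%MS,
          (forall x : 'rV[R]_n, (x <= l)%MS -> lie_br c H0 x = 0) &
          (forall x : 'rV[R]_n, (x <= p)%MS -> lie_br c H0 (lie_br c H0 x) = - x)]].

End BSD.

Section Complexified.
Variables (R : realType) (n : nat).
Variable c : 'I_n -> 'I_n -> 'rV[R]_n.
Variables (p : 'M[R]_n) (H0 : 'rV[R]_n).

Local Notation C := (R[i]).

Definition toC (x : R) : C := (x%:C)%C.

Definition cC : 'I_n -> 'I_n -> 'rV[C]_n := fun i j => map_mx toC (c i j).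

Definition conjv {m} (x : 'M[C]_(m, n)) : 'M[C]_(m, n) := map_mx (@conjc R) x.

Definition pplus : 'M[C]_n :=
  (map_mx toC p :&: kermx (ad cC (map_mx toC H0) - (Complex 0 1)%:M))%MS.

Definition hermK (a b : 'rV[C]_n) : C := killing cC a (conjv b).

Definition unitary_frame {k} (E : 'M[C]_(k, n)) :=
  forall i j : 'I_k, hermK (row i E) (row j E) = (i == j)%:R.

Definition Sigma {k} (E : 'M[C]_(k, n)) : 'rV[C]_n :=
  (Complex 0 1) *: \sum_(i < k) lie_br cC (row i E) (conjv (row i E)).

(* squared norm on l^C from the Hermitian form (lambda, conj mu)_K;
   since K is negative definite on l we take the positive form -K. *)
Definition normsq (x : 'rV[C]_n) : R := - complex.Re (hermK x x).

Definition frame_curve {k} (V : 'M[C]_n) (gam : R -> 'M[C]_(k, n)) :=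
  (forall t, (gam t <= V)%MS /\ unitary_frame (gam t)) /\
  (forall i j, derivable (fun t => complex.Re (gam t i j)) 0 1 /\
               derivable (fun t => complex.Im (gam t i j)) 0 1).

(* [B] in Gr(k, V) is a critical point of B |-> ||Sigma(B)||^2 :
   along every differentiable curve in Gr(k, V) through [B] (given by a
   curve of unitary frames) the derivative at t = 0 vanishes. *)
Definition Sigma_critical (k : nat) (V : 'M[C]_n) {m} (B : 'M[C]_(m, n)) :=
  forall gam : R -> 'M[C]_(k, n), frame_curve V gam -> (gam 0 == B)%MS ->
    derivable (fun t => normsq (Sigma (gam t))) 0 1 /\
    derive1 (fun t => normsq (Sigma (gam t))) 0 = 0.

End Complexified.

(* Totally geodesic holomorphic embeddings of pointed BSDs: injective Lie    *)
(* algebra morphisms rho : g' -> g (x |-> x *m P) intertwining ad H0' and    *)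
(* ad H0.                                                                    *)

Definition tg_embedding (R : realType) (n n' : nat)
  (c : 'I_n -> 'I_n -> 'rV[R]_n) (H0 : 'rV[R]_n)
  (c' : 'I_n' -> 'I_n' -> 'rV[R]_n') (H0' : 'rV[R]_n')
  (P : 'M[R]_(n', n)) : Prop :=
  [/\ row_free P,
      forall x y : 'rV[R]_n', lie_br c (x *m P) (y *m P) = lie_br c' x y *m P &
      forall x : 'rV[R]_n', lie_br c H0 (x *m P) = lie_br c' H0' x *m P].

(* Main.v *)
From HB Require Import structures.
Require Import Defs.
From mathcomp Require Import all_boot all_order all_algebra.
From mathcomp Require Import all_classical all_reals all_analysis.
From mathcomp Require Import complex.
From mathcomp Require Import ring.
Set Implicit Arguments. Unset Strict Implicit. Unset Printing Implicit Defensive.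
Import GRing.Theory Num.Theory.
Local Open Scope ring_scope.

HB.instance Definition _ (R : realType) := GRing.RMorphism.copy (@toC R) (real_complex R).
Section Der.
Variable R : realType.
Local Notation C := (R[i]).

Definition cder (f : R -> C) (d : C) :=
  is_derive (0:R) (1:R) (fun t => complex.Re (f t)) (complex.Re d) /\
  is_derive (0:R) (1:R) (fun t => complex.Im (f t)) (complex.Im d).

Lemma cder_ext f g d : f =1 g -> cder f d -> cder g d.
Proof. by move=> /funext ->. Qed.

Lemma cder_eq f d d' : d = d' -> cder f d -> cder f d'.
Proof. by move=> ->. Qed.

Lemma cder_cst (a : C) : cder (fun _ => a) 0.
Proof. by split; apply: is_derive_cst. Qed.

Lemma ReD (a b : C) : complex.Re (a + b) = complex.Re a + complex.Re b.
Proof. by case: a; case: b. Qed.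
Lemma ImD (a b : C) : complex.Im (a + b) = complex.Im a + complex.Im b.
Proof. by case: a; case: b. Qed.
Lemma ReM (a b : C) : complex.Re (a * b) = complex.Re a * complex.Re b - complex.Im a * complex.Im b.
Proof. by case: a; case: b. Qed.
Lemma ImM (a b : C) : complex.Im (a * b) = complex.Re a * complex.Im b + complex.Im a * complex.Re b.
Proof. by case: a => ? ?; case: b => ? ? /=; rewrite addrC. Qed.

Lemma cder_add f g a b : cder f a -> cder g b -> cder (fun t => f t + g t) (a + b).
Proof.
move=> [fr fi] [gr gi]; split.
  have -> : (fun t => complex.Re (f t + g t)) = (fun t => complex.Re (f t)) + (fun t => complex.Re (g t)).
    by apply: funext => t; rewrite ReD.
  by rewrite ReD; apply: is_deriveD.
have -> : (fun t => complex.Im (f t + g t)) = (fun t => complex.Im (f t)) + (fun t => complex.Im (g t)).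
  by apply: funext => t; rewrite ImD.
by rewrite ImD; apply: is_deriveD.
Qed.

Lemma cder_mul f g a b : cder f a -> cder g b ->
  cder (fun t => f t * g t) (a * g 0 + f 0 * b).
Proof.
move=> [fr fi] [gr gi]; split.
  have -> : (fun t => complex.Re (f t * g t)) = (fun t => complex.Re (f t)) * (fun t => complex.Re (g t)) - (fun t => complex.Im (f t)) * (fun t => complex.Im (g t)).
    by apply: funext => t; rewrite ReM.
  apply: is_derive_eq.
  rewrite /= ReD !ReM /GRing.scale /=; ring.
have -> : (fun t => complex.Im (f t * g t)) = (fun t => complex.Re (f t)) * (fun t => complex.Im (g t)) + (fun t => complex.Im (f t)) * (fun t => complex.Re (g t)).
  by apply: funext => t; rewrite ImM.
apply: is_derive_eq.
rewrite /= ImD !ImM /GRing.scale /=; ring.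
Qed.

Lemma cder_conj f a : cder f a -> cder (fun t => conjc (f t)) (conjc a).
Proof.
move=> [fr fi]; split.
  have -> : (fun t => complex.Re (conjc (f t))) = (fun t => complex.Re (f t)).
    by apply: funext => t; case: (f t).
  by have -> : complex.Re (conjc a) = complex.Re a by move: (a) => [].

have -> : (fun t => complex.Im (conjc (f t))) = - (fun t => complex.Im (f t)).
  by apply: funext => t; rewrite -[RHS]/(- complex.Im (f t)); case: (f t).
have -> : complex.Im (conjc a) = - complex.Im a by move: (a) => [].
exact: is_deriveN.


Qed.

Lemma cder_sum (I : finType) (F : I -> R -> C) (D : I -> C) :
  (forall i, cder (F i) (D i)) -> cder (fun t => \sum_i F i t) (\sum_i D i).
Proof.
move=> h; elim: (index_enum I) => [|x s ih].
  by rewrite big_nil; apply: (cder_ext _ (cder_cst 0)) => t; rewrite big_nil.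
rewrite big_cons; apply: (cder_ext _ (cder_add (h x) ih)) => t.
by rewrite big_cons.
Qed.


Definition linC {a b} (l : 'M[C]_(a,b) -> C) :=
  forall k x y, l (k *: x + y) = k * l x + l y.

Lemma linC0 a b (l : 'M[C]_(a,b) -> C) : linC l -> l 0 = 0.
Proof.
move=> H; have h := H 1 0 0; rewrite scale1r addr0 mul1r in h.
by apply: (addrI (l 0)); rewrite addr0 -h.
Qed.

Lemma linCD a b (l : 'M[C]_(a,b) -> C) : linC l -> forall x y, l (x + y) = l x + l y.
Proof. by move=> H x y; rewrite -[x]scale1r H mul1r scale1r. Qed.

Lemma linCZ a b (l : 'M[C]_(a,b) -> C) : linC l -> forall k x, l (k *: x) = k * l x.
Proof. by move=> H k x; rewrite -[k *: x]addr0 H linC0 // addr0. Qed.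

Lemma linC_sum a b (l : 'M[C]_(a,b) -> C) (I : finType) (F : I -> 'M[C]_(a,b)) :
  linC l -> l (\sum_i F i) = \sum_i l (F i).
Proof. by move=> H; apply: (big_morph l (linCD H) (linC0 H)). Qed.

Lemma lin_expand a b (l : 'M[C]_(a,b) -> C) X : linC l ->
  l X = \sum_i \sum_j X i j * l (delta_mx i j).
Proof.
move=> H; rewrite {1}(matrix_sum_delta X) linC_sum //; apply: eq_bigr => i _.
by rewrite linC_sum //; apply: eq_bigr => j _; rewrite linCZ.
Qed.

Definition mcder {a b} (F : R -> 'M[C]_(a,b)) (D : 'M[C]_(a,b)) :=
  forall i j, cder (fun t => F t i j) (D i j).

Lemma cder_lin a b (l : 'M[C]_(a,b) -> C) F D : linC l -> mcder F D ->
  cder (fun t => l (F t)) (l D).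
Proof.
move=> H hF.
apply: (cder_ext (f := fun t => \sum_i \sum_j F t i j * l (delta_mx i j))).
  by move=> t; rewrite -lin_expand.
rewrite (lin_expand _ H); apply: cder_sum => i; apply: cder_sum => j.
apply: cder_eq (cder_mul (hF i j) (cder_cst _)).
by rewrite mulr0 addr0.
Qed.

Lemma cder_bilin a b a' b' (phi : 'M[C]_(a,b) -> 'M[C]_(a',b') -> C) F G DF DG :
  (forall y, linC (phi^~ y)) -> (forall x, linC (phi x)) ->
  mcder F DF -> mcder G DG ->
  cder (fun t => phi (F t) (G t)) (phi DF (G 0) + phi (F 0) DG).
Proof.
move=> HL HR hF hG.
apply: (cder_ext (f := fun t => \sum_i \sum_j F t i j * phi (delta_mx i j) (G t))).
  by move=> t; rewrite -(lin_expand _ (HL (G t))).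
rewrite (lin_expand DF (HL (G 0))) (lin_expand (F 0) (HL DG)) -big_split.
apply: cder_sum => i; rewrite -big_split; apply: cder_sum => j /=.
apply: cder_eq (cder_mul (hF i j) (cder_lin (HR _) hG)).
by rewrite -linCZ // -[in RHS]linCZ.
Qed.

Lemma mcder_bilin a b a' b' e f
  (psi : 'M[C]_(a,b) -> 'M[C]_(a',b') -> 'M[C]_(e,f)) F G DF DG :
  (forall y k x x', psi (k *: x + x') y = k *: psi x y + psi x' y) ->
  (forall x k y y', psi x (k *: y + y') = k *: psi x y + psi x y') ->
  mcder F DF -> mcder G DG ->
  mcder (fun t => psi (F t) (G t)) (psi DF (G 0) + psi (F 0) DG).
Proof.
move=> HL HR hF hG i j; rewrite mxE.
apply: (cder_bilin (phi := fun x y => psi x y i j)) => //.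
  by move=> y k x x'; rewrite HL !mxE.
by move=> x k y y'; rewrite HR !mxE.
Qed.

Lemma mcder_conj a b (F : R -> 'M[C]_(a,b)) D : mcder F D ->
  mcder (fun t => map_mx (@conjc R) (F t)) (map_mx (@conjc R) D).
Proof.
move=> h i j; rewrite mxE.
by apply: (cder_ext _ (cder_conj (h i j))) => t; rewrite mxE.
Qed.

Lemma cder_unique f d d' : cder f d -> cder f d' -> d = d'.
Proof.
move=> [h1 h2] [h3 h4].
have e1 : complex.Re d = complex.Re d'.
  by rewrite -(@derive_val _ _ _ _ _ _ _ h1) -(@derive_val _ _ _ _ _ _ _ h3).
have e2 : complex.Im d = complex.Im d'.
  by rewrite -(@derive_val _ _ _ _ _ _ _ h2) -(@derive_val _ _ _ _ _ _ _ h4).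
by clear h1 h2 h3 h4; move: e1 e2; case: d; case: d' => ? ? ? ? /= -> ->.
Qed.

End Der.

Section Lie.
Variables (K : comNzRingType) (n : nat) (c : 'I_n -> 'I_n -> 'rV[K]_n).

Definition linV {a b} (f : 'rV[K]_n -> 'M[K]_(a,b)) :=
  forall k x y, f (k *: x + y) = k *: f x + f y.

Lemma linV0 a b (f : 'rV[K]_n -> 'M[K]_(a,b)) : linV f -> f 0 = 0.
Proof.
move=> H; have h := H 1 0 0; rewrite !scale1r addr0 in h.
by apply: (addrI (f 0)); rewrite addr0 -h.
Qed.

Lemma linV_expand a b (f : 'rV[K]_n -> 'M[K]_(a,b)) x : linV f ->
  f x = \sum_i x 0 i *: f (delta_mx 0 i).
Proof.
move=> H; rewrite {1}(row_sum_delta x).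
elim/big_rec2: _ => [|i y z _ <-]; first exact: linV0.
by rewrite H.
Qed.

Lemma linV_zero a b (f : 'rV[K]_n -> 'M[K]_(a,b)) x : linV f ->
  (forall i, f (delta_mx 0 i) = 0) -> f x = 0.
Proof.
by move=> H h; rewrite (linV_expand _ H) big1 // => i _; rewrite h scaler0.
Qed.

Lemma lie_brDl k x x' y : lie_br c (k *: x + x') y = k *: lie_br c x y + lie_br c x' y.
Proof.
rewrite /lie_br scaler_sumr -big_split; apply: eq_bigr => i _.
rewrite scaler_sumr -big_split; apply: eq_bigr => j _.
by rewrite !mxE /= scalerA -scalerDl; congr (_ *: _); ring.
Qed.

Lemma lie_brDr k x y y' : lie_br c x (k *: y + y') = k *: lie_br c x y + lie_br c x y'.
Proof.
rewrite /lie_br scaler_sumr -big_split; apply: eq_bigr => i _.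
rewrite scaler_sumr -big_split; apply: eq_bigr => j _.
by rewrite !mxE /= scalerA -scalerDl; congr (_ *: _); ring.
Qed.

Lemma lie_br0l y : lie_br c 0 y = 0.
Proof. by apply: (linV0 (f := fun x => lie_br c x y)) => k x x'; rewrite lie_brDl. Qed.
Lemma lie_br0r x : lie_br c x 0 = 0.
Proof. by apply: (linV0 (f := fun y => lie_br c x y)) => k y y'; rewrite lie_brDr. Qed.
Lemma lie_brNl x y : lie_br c (- x) y = - lie_br c x y.
Proof. by rewrite -[- x]addr0 -scaleN1r lie_brDl lie_br0l addr0 scaleN1r. Qed.
Lemma lie_brNr x y : lie_br c x (- y) = - lie_br c x y.
Proof. by rewrite -[- y]addr0 -scaleN1r lie_brDr lie_br0r addr0 scaleN1r. Qed.
Lemma lie_brZl k x y : lie_br c (k *: x) y = k *: lie_br c x y.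
Proof. by rewrite -[k *: x]addr0 lie_brDl lie_br0l addr0. Qed.
Lemma lie_brZr k x y : lie_br c x (k *: y) = k *: lie_br c x y.
Proof. by rewrite -[k *: y]addr0 lie_brDr lie_br0r addr0. Qed.
Lemma lie_brAl x x' y : lie_br c (x + x') y = lie_br c x y + lie_br c x' y.
Proof. by have := lie_brDl 1 x x' y; rewrite !scale1r. Qed.
Lemma lie_brAr x y y' : lie_br c x (y + y') = lie_br c x y + lie_br c x y'.
Proof. by have := lie_brDr 1 x y y'; rewrite !scale1r. Qed.
Lemma lie_br_suml (I : finType) (F : I -> 'rV[K]_n) y :
  lie_br c (\sum_i F i) y = \sum_i lie_br c (F i) y.
Proof. exact: (big_morph (fun x => lie_br c x y) (fun a b => lie_brAl a b y) (lie_br0l y)). Qed.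
Lemma lie_br_sumr (I : finType) (F : I -> 'rV[K]_n) x :
  lie_br c x (\sum_i F i) = \sum_i lie_br c x (F i).
Proof. exact: (big_morph (fun y => lie_br c x y) (fun a b => lie_brAr x a b) (lie_br0r x)). Qed.

Lemma addAC3 (V : zmodType) (a b c' d e f : V) :
  (a + b) + (c' + d) + (e + f) = (a + c' + e) + (b + d + f).
Proof. by rewrite (addrACA a b c' d) (addrACA (a + c') (b + d) e f). Qed.

Definition jac x y z := lie_br c x (lie_br c y z) + lie_br c y (lie_br c z x)
                 + lie_br c z (lie_br c x y).

Lemma jac_lin1 y z : linV (fun x => jac x y z).
Proof. by move=> k x x'; rewrite /jac !(lie_brDl, lie_brDr) addAC3 !scalerDr. Qed.
Lemma jac_lin2 x z : linV (fun y => jac x y z).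
Proof. by move=> k y y'; rewrite /jac !(lie_brDl, lie_brDr) addAC3 !scalerDr. Qed.
Lemma jac_lin3 x y : linV (fun z => jac x y z).
Proof. by move=> k z z'; rewrite /jac !(lie_brDl, lie_brDr) addAC3 !scalerDr. Qed.

Lemma jac_zero : (forall i j k, jac (delta_mx 0 i) (delta_mx 0 j) (delta_mx 0 k) = 0) ->
  forall x y z, jac x y z = 0.
Proof.
move=> h x y z; apply: linV_zero (jac_lin1 _ _) _ => i.
apply: linV_zero (jac_lin2 _ _) _ => j.
by apply: linV_zero (jac_lin3 _ _) _ => k.
Qed.

Definition asym x y := lie_br c x y + lie_br c y x.
Lemma asym_zero : (forall i j, asym (delta_mx 0 i) (delta_mx 0 j) = 0) ->
  forall x y, asym x y = 0.
Proof.
move=> h x y; apply: (linV_zero (f := fun x => asym x y)) => [k a b|i].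
  by rewrite /asym lie_brDl lie_brDr addrACA scalerDr.
apply: (linV_zero (f := fun y => asym _ y)) => [k a b|j //].
by rewrite /asym lie_brDl lie_brDr addrACA scalerDr.
Qed.

Lemma is_lie_asym : is_lie c -> forall x y, asym x y = 0.
Proof.
move=> [h _] x y; have := h (x + y).
by rewrite lie_brAl !lie_brAr !h add0r addr0.
Qed.

Lemma mul_ad v x : v *m ad c x = lie_br c x v.
Proof.
rewrite mulmx_sum_row (linV_expand (f := lie_br c x) v).
  by apply: eq_bigr => i _; rewrite rowK.
by move=> k a b; rewrite lie_brDr.
Qed.

Lemma ad_lin k x x' : ad c (k *: x + x') = k *: ad c x + ad c x'.
Proof. by apply/matrixP => i j; rewrite !mxE lie_brDl !mxE. Qed.

Hypothesis asymH : forall x y, lie_br c x y = - lie_br c y x.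
Hypothesis jacH : forall x y z, jac x y z = 0.

Lemma lie_jac2 x y z : lie_br c (lie_br c x y) z = lie_br c x (lie_br c y z) - lie_br c y (lie_br c x z).
Proof.
have := jacH x y z; rewrite /jac => /eqP; rewrite addrC addr_eq0 => /eqP e.
rewrite asymH e opprK; congr (_ + _).
by rewrite (asymH z x) lie_brNr.
Qed.

Lemma ad_br x y : ad c (lie_br c x y) = ad c y *m ad c x - ad c x *m ad c y.
Proof.
apply/row_matrixP => i.
by rewrite rowK linearB /= !row_mul !rowK !mul_ad lie_jac2.
Qed.

Lemma killing_linl y k x x' : killing c (k *: x + x') y = k * killing c x y + killing c x' y.
Proof. by rewrite /killing ad_lin mulmxDl -scalemxAl mxtraceD mxtraceZ. Qed.

Lemma killing_sym x y : killing c x y = killing c y x.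
Proof. exact: mxtrace_mulC. Qed.

Lemma killing_linr x k y y' : killing c x (k *: y + y') = k * killing c x y + killing c x y'.
Proof. by rewrite !(killing_sym x) killing_linl. Qed.

Lemma killing_inv x y z : killing c (lie_br c x y) z = killing c x (lie_br c y z).
Proof.
rewrite /killing !ad_br mulmxBl mulmxBr !raddfB /= -!mulmxA.
by rewrite (mxtrace_mulC (ad c y)) -!mulmxA.
Qed.

End Lie.



Lemma lie_br_map (K L : comNzRingType) (f : {rmorphism K -> L}) m
  (d : 'I_m -> 'I_m -> 'rV[K]_m) x y :
  lie_br (fun i j => map_mx f (d i j)) (map_mx f x) (map_mx f y) = map_mx f (lie_br d x y).
Proof.
rewrite /lie_br map_mx_sum; apply: eq_bigr => i _.
rewrite map_mx_sum; apply: eq_bigr => j _.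
by rewrite map_mxZ rmorphM !mxE.
Qed.

Section Cx.
Variables (R : realType) (n : nat) (c : 'I_n -> 'I_n -> 'rV[R]_n).
Local Notation C := (R[i]).
Local Notation cc := (cC c).

Lemma cC_map x y : lie_br cc (map_mx (@toC R) x) (map_mx (@toC R) y) = map_mx (@toC R) (lie_br c x y).
Proof. exact: lie_br_map. Qed.

Lemma deltaC i : delta_mx 0 i = map_mx (@toC R) (delta_mx 0 i) :> 'rV[C]_n.
Proof. by rewrite map_delta_mx. Qed.

Lemma cC_asym : is_lie c -> forall x y, lie_br cc x y = - lie_br cc y x.
Proof.
move=> L x y; apply/eqP; rewrite -addr_eq0; apply/eqP.
apply: (asym_zero (c := cc)) => i j.
rewrite /asym !deltaC !cC_map -map_mxD.
by have := is_lie_asym L (delta_mx 0 i) (delta_mx 0 j); rewrite /asym => ->; rewrite map_mx0.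
Qed.

Lemma cC_jac : is_lie c -> forall x y z, jac cc x y z = 0.
Proof.
move=> L; apply: jac_zero => i j k.
rewrite /jac !deltaC !cC_map -!map_mxD.
by have := proj2 L (delta_mx 0 i) (delta_mx 0 j) (delta_mx 0 k) => ->; rewrite map_mx0.
Qed.

Lemma conjv_toC m (M : 'M[R]_(m, n)) : conjv (map_mx (@toC R) M) = map_mx (@toC R) M.
Proof. by apply/matrixP => a b; rewrite !mxE conjc_real. Qed.

Lemma conjv_lie x y : conjv (lie_br cc x y) = lie_br cc (conjv x) (conjv y).
Proof.
rewrite /conjv -lie_br_map; congr lie_br.
by apply: funext => i; apply: funext => j; exact: conjv_toC.
Qed.

Lemma conjv_delta i : conjv (delta_mx 0 i) = delta_mx 0 i :> 'rV[C]_n.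
Proof. exact: map_delta_mx. Qed.

Lemma ad_conj x : ad cc (conjv x) = map_mx (@conjc R) (ad cc x).
Proof.
apply/matrixP => i j; rewrite !mxE -[in LHS](conjv_delta i) -conjv_lie.
by rewrite /conjv mxE.
Qed.

Lemma killing_conj x y : conjc (killing cc x y) = killing cc (conjv x) (conjv y).
Proof. by rewrite /killing !ad_conj -map_mxM trace_map_mx. Qed.

Lemma conjvK m (M : 'M[C]_(m, n)) : conjv (conjv M) = M.
Proof. by apply/matrixP => a b; rewrite !mxE conjcK. Qed.

Lemma conjvD m (M N : 'M[C]_(m, n)) : conjv (M + N) = conjv M + conjv N.
Proof. exact: map_mxD. Qed.

Lemma conjvZ m k (M : 'M[C]_(m, n)) : conjv (k *: M) = conjc k *: conjv M.
Proof. exact: map_mxZ. Qed.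

Lemma conjv_sum m (I : finType) (F : I -> 'M[C]_(m, n)) :
  conjv (\sum_i F i) = \sum_i conjv (F i).
Proof. exact: map_mx_sum. Qed.

End Cx.



Section Pplus.
Variables (R : realType) (n : nat) (c : 'I_n -> 'I_n -> 'rV[R]_n).
Variables (l p : 'M[R]_n) (H0 : 'rV[R]_n).
Hypothesis bsd : pointed_bsd c l p H0.
Local Notation C := (R[i]).
Local Notation cc := (cC c).
Local Notation H := (map_mx (@toC R) H0).
Local Notation pp := (pplus c p H0).
Local Notation ci := (Complex (0:R) 1).

Lemma bsd_lie : is_lie c. Proof. by case: bsd. Qed.

Lemma F1 x : (x <= pp)%MS -> lie_br cc H x = ci *: x.
Proof.
rewrite sub_capmx => /andP [_ /sub_kermxP].
by rewrite mulmxBr mul_ad mul_mx_scalar => /eqP; rewrite subr_eq0 => /eqP.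
Qed.

Lemma F2 x : (x <= map_mx (@toC R) p)%MS -> lie_br cc H x = ci *: x -> (x <= pp)%MS.
Proof.
move=> hp hx; rewrite sub_capmx hp /=; apply/sub_kermxP.
by rewrite mulmxBr mul_ad mul_mx_scalar hx subrr.
Qed.

Lemma F3 x : (x <= map_mx (@toC R) l)%MS -> lie_br cc H x = 0.
Proof.
case: bsd => _ _ _ _ [_ hl _].
move/submxP => [u ->]; rewrite mulmx_sum_row lie_br_sumr big1 // => i _.
rewrite lie_brZr -map_row cC_map hl ?row_sub //.
by rewrite map_mx0 scaler0.
Qed.

Lemma F4 x : (x <= map_mx (@toC R) p)%MS -> lie_br cc H (lie_br cc H x) = - x.
Proof.
case: bsd => _ _ _ _ [_ _ hp].
move/submxP => [u ->]; rewrite mulmx_sum_row.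
rewrite (lie_br_sumr cc (fun i => u 0 i *: row i (map_mx (@toC R) p)) H) lie_br_sumr -sumrN.
apply: eq_bigr => i _.
rewrite !lie_brZr -map_row !cC_map hp ?row_sub //.
by rewrite map_mxN scalerN.
Qed.

Lemma F5 (x : 'rV[C]_n) : exists a b : 'rV[C]_n, [/\ x = a + b, (a <= map_mx (@toC R) l)%MS & (b <= map_mx (@toC R) p)%MS].
Proof.
case: bsd => _ [[/andP [_ h1] _] _] _ _ _.
move: h1 => /sub_addsmxP [[u1 u2] /= e].
have e' : 1%:M = map_mx (@toC R) u1 *m map_mx (@toC R) l + map_mx (@toC R) u2 *m map_mx (@toC R) p.
  by rewrite -!map_mxM -map_mxD -e map_mx1.
exists ((x *m map_mx (@toC R) u1) *m map_mx (@toC R) l), ((x *m map_mx (@toC R) u2) *m map_mx (@toC R) p).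
split; [|exact: submxMl|exact: submxMl].
by rewrite -!mulmxA -mulmxDr -e' mulmx1.
Qed.

Lemma F6 x : (x <= pp)%MS -> lie_br cc H (conjv x) = - ci *: conjv x.
Proof.
move=> hx; rewrite -(conjv_toC H0) -conjv_lie F1 // conjvZ.
congr (_ *: _); apply/eqP; rewrite eq_complex /= oppr0 !eqxx //.
Qed.

Lemma asymC : forall x y, lie_br cc x y = - lie_br cc y x.
Proof. exact: cC_asym bsd_lie. Qed.
Lemma jacC : forall x y z, jac cc x y z = 0.
Proof. exact: cC_jac bsd_lie. Qed.

Lemma derH y z : lie_br cc H (lie_br cc y z) = lie_br cc (lie_br cc H y) z + lie_br cc y (lie_br cc H z).
Proof. by rewrite (lie_jac2 asymC jacC) subrK. Qed.

Lemma HSigma k (X : 'M[C]_(k, n)) : (X <= pp)%MS -> lie_br cc H (Sigma c X) = 0.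
Proof.
move=> hX; rewrite /Sigma lie_brZr lie_br_sumr big1 ?scaler0 // => r _.
have hr : (row r X <= pp)%MS by apply: submx_trans (row_sub r X) hX.
rewrite derH F1 // F6 // lie_brZl lie_brZr scaleNr addrN //.
Qed.

Lemma pplus_stable k (X : 'M[C]_(k, n)) x : (X <= pp)%MS -> (x <= pp)%MS ->
  (lie_br cc (Sigma c X) x <= pp)%MS.
Proof.
move=> hX hx; set v := lie_br cc (Sigma c X) x.
have hv : lie_br cc H v = ci *: v.
  by rewrite /v derH HSigma // lie_br0l add0r F1 // lie_brZr.
have [a [b [ev ha hb]]] := F5 v.
have e1 : lie_br cc H (lie_br cc H v) = - v.
  rewrite hv lie_brZr hv scalerA.
  have -> : ci * ci = - (1 : C).
    by apply/eqP; rewrite eq_complex /= !(mul0r, mulr0, mul1r) sub0r addr0 oppr0 !eqxx.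
  by rewrite scaleNr scale1r.
have e2 : lie_br cc H (lie_br cc H v) = - b.
  by rewrite ev (lie_brAr _ H a b) (F3 ha) add0r F4.
have evb : v = b by apply: oppr_inj; rewrite -e1 e2.
by rewrite evb in hv *; apply: F2.
Qed.

End Pplus.



Section Alg.
Variables (R : realType) (n : nat) (c : 'I_n -> 'I_n -> 'rV[R]_n).
Hypothesis L : is_lie c.
Local Notation C := (R[i]).
Local Notation cc := (cC c).
Local Notation K := (killing cc).

Lemma KlinL y : linC (fun x => K x y).
Proof. by move=> k x x'; rewrite killing_linl. Qed.
Lemma KlinR x : linC (K x).
Proof. by move=> k y y'; rewrite killing_linr. Qed.

Lemma K_skew S x y : K (lie_br cc S x) y = - K x (lie_br cc S y).
Proof.
rewrite (cC_asym L S x) -scaleN1r -[_ *: _]addr0 killing_linl.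
rewrite (killing_inv (cC_asym L) (cC_jac L)).
have -> : K 0 y = 0 by apply: (linC0 (KlinL y)).
by rewrite addr0 mulN1r.
Qed.

Lemma K_sumZl (k : nat) (m : 'I_k -> C) (e : 'I_k -> 'rV[C]_n) y :
  K (\sum_j m j *: e j) y = \sum_j m j * K (e j) y.
Proof.
rewrite (linC_sum _ (KlinL y)); apply: eq_bigr => j _.
by rewrite (linCZ (KlinL y)).
Qed.
Lemma K_sumZr (k : nat) (m : 'I_k -> C) (e : 'I_k -> 'rV[C]_n) x :
  K x (\sum_j m j *: e j) = \sum_j m j * K x (e j).
Proof.
rewrite (linC_sum _ (KlinR x)); apply: eq_bigr => j _.
by rewrite (linCZ (KlinR x)).
Qed.

Variables (k : nat) (E A : 'M[C]_(k, n)) (S : 'rV[C]_n) (M : 'M[C]_k).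
Hypothesis hSreal : conjv S = S.
Hypothesis hM : forall r, lie_br cc S (row r E) = \sum_j M r j *: row j E.
Hypothesis hU : forall m j, K (row m E) (conjv (row j E)) = (m == j)%:R.
Hypothesis hD : forall r j, K (row r A) (conjv (row j E)) + K (row r E) (conjv (row j A)) = 0.

Lemma hMc r : lie_br cc S (conjv (row r E)) = \sum_j conjc (M r j) *: conjv (row j E).
Proof.
by rewrite -{1}hSreal -conjv_lie hM conjv_sum; apply: eq_bigr => j _; rewrite conjvZ.
Qed.

Lemma M_skew r j : M r j = - conjc (M j r).
Proof.
have e1 : K (lie_br cc S (row r E)) (conjv (row j E)) = M r j.
  rewrite hM K_sumZl (bigD1 j) //= hU eqxx mulr1 big1 ?addr0 // => m /negbTE hm.
  by rewrite hU hm mulr0.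
rewrite -e1 K_skew hMc K_sumZr (bigD1 r) //= hU eqxx mulr1 big1 ?addr0 // => m /negbTE hm.
by rewrite hU eq_sym hm mulr0.
Qed.

Lemma main_alg :
  \sum_r K (lie_br cc S (row r A)) (conjv (row r E)) +
  \sum_r K (lie_br cc S (row r E)) (conjv (row r A)) = 0.
Proof.
have T1 : \sum_r K (lie_br cc S (row r A)) (conjv (row r E)) =
          - \sum_r \sum_j M j r * K (row r E) (conjv (row j A)).
  rewrite -sumrN; apply: eq_bigr => r _.
  rewrite K_skew hMc K_sumZr; congr (- _); apply: eq_bigr => j _.
  have -> : K (row r A) (conjv (row j E)) = - K (row r E) (conjv (row j A)).
    by apply/eqP; rewrite -addr_eq0 hD.
  by rewrite (M_skew j r) mulrN mulNr.
have T2 : \sum_r K (lie_br cc S (row r E)) (conjv (row r A)) =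
          \sum_r \sum_j M j r * K (row r E) (conjv (row j A)).
  under eq_bigr => r _ do rewrite hM K_sumZl.
  by rewrite exchange_big.
by rewrite T1 T2 addNr.
Qed.

End Alg.



Section Psi.
Variables (R : realType) (n : nat) (c : 'I_n -> 'I_n -> 'rV[R]_n).
Local Notation C := (R[i]).
Local Notation cc := (cC c).
Local Notation ci := (Complex (0:R) 1).

Definition psi k (X Y : 'M[C]_(k, n)) : 'rV[C]_n :=
  ci *: \sum_r lie_br cc (row r X) (row r Y).

Lemma rowDZ m (r : 'I_m) (k : C) (X X' : 'M[C]_(m, n)) :
  row r (k *: X + X') = k *: row r X + row r X'.
Proof. by apply/rowP => j; rewrite !mxE. Qed.

Lemma psi_linl k Y a X X' : psi (a *: X + X') Y = a *: psi X Y + @psi k X' Y.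
Proof.
rewrite /psi; under eq_bigr => r _ do rewrite rowDZ lie_brDl.
by rewrite big_split -scaler_sumr scalerDr !scalerA mulrC.
Qed.

Lemma psi_linr k X a Y Y' : psi X (a *: Y + Y') = a *: psi X Y + @psi k X Y'.
Proof.
rewrite /psi; under eq_bigr => r _ do rewrite rowDZ lie_brDr.
by rewrite big_split -scaler_sumr scalerDr !scalerA mulrC.
Qed.

Lemma Sigma_psi k (X : 'M[C]_(k, n)) : Sigma c X = psi X (conjv X).
Proof. by rewrite /Sigma /psi; congr (_ *: _); apply: eq_bigr => r _; rewrite /conjv map_row. Qed.

Lemma conj_psi (L : is_lie c) k (X Y : 'M[C]_(k, n)) :
  conjv (psi X Y) = psi (conjv Y) (conjv X).
Proof.
rewrite /psi conjvZ conjv_sum.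
have -> : conjc ci = - ci by apply/eqP; rewrite eq_complex /= oppr0 !eqxx.
rewrite scaleNr -scalerN -sumrN; congr (_ *: _); apply: eq_bigr => r _.
by rewrite conjv_lie (cC_asym L) opprK /conjv !map_row.
Qed.

End Psi.



Lemma linV_eq (K : comNzRingType) n a b (f g : 'rV[K]_n -> 'M[K]_(a,b)) :
  linV f -> linV g -> (forall i, f (delta_mx 0 i) = g (delta_mx 0 i)) -> forall x, f x = g x.
Proof.
move=> hf hg h x; rewrite (linV_expand x hf) (linV_expand x hg).
by apply: eq_bigr => i _; rewrite h.
Qed.

Section Rho.
Variables (R : realType) (n n' : nat).
Variables (c : 'I_n -> 'I_n -> 'rV[R]_n) (H0 : 'rV[R]_n).
Variables (c' : 'I_n' -> 'I_n' -> 'rV[R]_n') (H0' : 'rV[R]_n').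
Variable (P : 'M[R]_(n', n)).
Hypothesis tg : tg_embedding c H0 c' H0' P.
Local Notation PC := (map_mx (@toC R) P).

Lemma rhoC (x y : 'rV[R[i]]_n') :
  lie_br (cC c) (x *m PC) (y *m PC) = lie_br (cC c') x y *m PC.
Proof.
case: tg => _ hb _.
have linM k (u u' : 'rV[R[i]]_n') : (k *: u + u') *m PC = k *: (u *m PC) + u' *m PC.
  by rewrite mulmxDl scalemxAl.
move: x; apply: linV_eq.
- by move=> k u u'; rewrite linM lie_brDl.
- by move=> k u u'; rewrite lie_brDl mulmxDl scalemxAl.
move=> i; move: y; apply: linV_eq.
- by move=> k u u'; rewrite linM lie_brDr.
- by move=> k u u'; rewrite lie_brDr mulmxDl scalemxAl.
move=> j.
by rewrite !deltaC -!map_mxM (cC_map c) hb map_mxM (cC_map c').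
Qed.

Lemma Sigma_map k (X : 'M[R[i]]_(k, n')) : Sigma c (X *m PC) = Sigma c' X *m PC.
Proof.
rewrite /Sigma -scalemxAl mulmx_suml; congr (_ *: _); apply: eq_bigr => r _.
rewrite row_mul /conjv map_mxM (_ : map_mx (@conjc R) PC = PC) ?rhoC //.
exact: (conjv_toC P).
Qed.

End Rho.



Unset Implicit Arguments.
Set Strict Implicit.

Theorem lemma7 (R : realType) (n n' : nat)
  (c : 'I_n -> 'I_n -> 'rV[R]_n) (l p : 'M[R]_n) (H0 : 'rV[R]_n)
  (c' : 'I_n' -> 'I_n' -> 'rV[R]_n') (l' p' : 'M[R]_n') (H0' : 'rV[R]_n')
  (P : 'M[R]_(n', n)) :
  pointed_bsd c l p H0 ->
  pointed_bsd c' l' p' H0' ->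
  tg_embedding c H0 c' H0' P ->
  Sigma_critical c (\rank (pplus c' p' H0')) (pplus c p H0)
    (pplus c' p' H0' *m map_mx (@toC R) P).
Proof.
move=> bsd bsd' tg gam [hV hder] hB.
have L : is_lie c by case: bsd.
set E0 := gam 0.
pose A := \matrix_(i, j) (('D_1 (fun t => complex.Re (gam t i j)) 0) +i*
                          ('D_1 (fun t => complex.Im (gam t i j)) 0))%C.
have hA : mcder gam A.
  by move=> i j; rewrite mxE; have [h1 h2] := hder i j; split; exact: derivableP.
have hG : mcder (fun t => conjv (gam t)) (conjv A) := mcder_conj hA.
have hS : mcder (fun t => Sigma c (gam t)) (psi c A (conjv E0) + psi c E0 (conjv A)).
  have -> : (fun t => Sigma c (gam t)) = (fun t => psi c (gam t) (conjv (gam t))).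
    by apply: funext => t; rewrite Sigma_psi.
  exact: (mcder_bilin (fun y a x x' => psi_linl c y a x x')
                      (fun x a y y' => psi_linr c x a y y') hA hG).
set DS := psi c A (conjv E0) + psi c E0 (conjv A).
set S0 := Sigma c E0.
have hK : cder (fun t => killing (cC c) (Sigma c (gam t)) (conjv (Sigma c (gam t))))
            (killing (cC c) DS (conjv S0) + killing (cC c) S0 (conjv DS)).
  exact: (cder_bilin (KlinL c) (KlinR c) hS (mcder_conj hS)).
have hU : forall m j, killing (cC c) (row m E0) (conjv (row j E0)) = (m == j)%:R.
  by move=> m j; have := (hV 0).2 m j.
have hD : forall r j, killing (cC c) (row r A) (conjv (row j E0)) +
                      killing (cC c) (row r E0) (conjv (row j A)) = 0.
  move=> r j.
  have h1 : cder (fun t => killing (cC c) (row r (gam t)) (row j (conjv (gam t))))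
     (killing (cC c) (row r A) (row j (conjv E0)) + killing (cC c) (row r E0) (row j (conjv A))).
    apply: (cder_bilin (phi := fun (X Y : 'M[R[i]]_(_, n)) => killing (cC c) (row r X) (row j Y)) _ _ hA hG).
    - by move=> Y a X X'; rewrite rowDZ killing_linl.
    - by move=> X a Y Y'; rewrite rowDZ killing_linr.
  have h2 : cder (fun t => killing (cC c) (row r (gam t)) (row j (conjv (gam t)))) 0.
    apply: (cder_ext _ (cder_cst ((r == j)%:R))) => t.
    by rewrite /conjv -map_row; have := (hV t).2 r j.
  by rewrite /conjv !map_row; exact: (cder_unique h1 h2).
move/andP: hB => [hEB hBE].
move/submxP: (hEB) => [D hD0].
set X := D *m pplus c' p' H0'.
have hX : (X <= pplus c' p' H0')%MS by apply: submxMl.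
have eE : E0 = X *m map_mx (@toC R) P by rewrite /E0 hD0 mulmxA.
have hS0 : S0 = Sigma c' X *m map_mx (@toC R) P by rewrite /S0 eE (Sigma_map tg).
have hsub : (\matrix_r lie_br (cC c) S0 (row r E0) <= E0)%MS.
  apply/row_subP => r; rewrite rowK.
  have eR : row r E0 = row r X *m map_mx (@toC R) P by rewrite eE row_mul.
  rewrite hS0 eR (rhoC tg).
  apply: submx_trans hBE; apply: submxMr; apply: (pplus_stable bsd' hX).
  exact: submx_trans (row_sub r X) hX.
move/submxP: hsub => [M hMm].
have hM : forall r, lie_br (cC c) S0 (row r E0) = \sum_j M r j *: row j E0.
  move=> r; have := congr1 (row r) hMm; rewrite rowK row_mul mulmx_sum_row => ->.
  by apply: eq_bigr => j _; rewrite mxE.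
have hSr : conjv S0 = S0 by rewrite /S0 Sigma_psi (conj_psi L) conjvK.
have Dk0 : killing (cC c) DS (conjv S0) + killing (cC c) S0 (conjv DS) = 0.
  have hDr : conjv DS = DS by rewrite /DS conjvD !(conj_psi L) !conjvK addrC.
  rewrite hSr hDr (killing_sym _ DS).
  suff -> : killing (cC c) S0 DS = 0 by rewrite addr0.
  have Kpsi : forall (k0 : nat) (X Y : 'M[R[i]]_(k0, n)), killing (cC c) S0 (psi c X Y) =
     (Complex 0 1) * \sum_r killing (cC c) (lie_br (cC c) S0 (row r X)) (row r Y).
    move=> k0 X' Y; rewrite /psi; rewrite (linCZ (KlinR c S0)) (linC_sum _ (KlinR c S0)).
    congr (_ * _); apply: eq_bigr => r _.
    by rewrite (killing_inv (cC_asym L) (cC_jac L)).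
  have e1 : \sum_r killing (cC c) (lie_br (cC c) S0 (row r A)) (row r (conjv E0)) =
            \sum_r killing (cC c) (lie_br (cC c) S0 (row r A)) (conjv (row r E0)).
    by apply: eq_bigr => r _; rewrite /conjv map_row.
  have e2 : \sum_r killing (cC c) (lie_br (cC c) S0 (row r E0)) (row r (conjv A)) =
            \sum_r killing (cC c) (lie_br (cC c) S0 (row r E0)) (conjv (row r A)).
    by apply: eq_bigr => r _; rewrite /conjv map_row.
  rewrite /DS (linCD (KlinR c S0)) !Kpsi e1 e2.
  by rewrite -mulrDr (main_alg L hSr hM hU hD) mulr0.
have hN : is_derive (0:R) (1:R) (fun t => normsq c (Sigma c (gam t)))
            (- complex.Re (killing (cC c) DS (conjv S0) + killing (cC c) S0 (conjv DS))).
  have -> : (fun t => normsq c (Sigma c (gam t))) =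
            - (fun t => complex.Re (killing (cC c) (Sigma c (gam t)) (conjv (Sigma c (gam t))))).
    by apply: funext => t.
  by apply: is_deriveN; case: hK.
split; first exact: (@ex_derive _ _ _ _ _ _ _ hN).
by rewrite derive1E (@derive_val _ _ _ _ _ _ _ hN) Dk0 /= oppr0.
Qed.
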